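(* In the formal power series ring $\mathbb Q[[u,v,z]]$, $$\sum_{k,l,n\geq0}\{H_kE_l\}_n\,u^kv^lz^n=\frac{\prod_{j\geq0}(1+u^jz)}{\prod_{j\geq0}(1-u^jvz)}.$$
   Context: For $i\geq1$, $X_i(\sigma)$ is the number of $i$-cycles of $\sigma$. For a partition $\alpha=1^{a_1}2^{a_2}\cdots$ ($a_i$ = number of parts equal to $i$, $|\alpha|=\sum ia_i$, $l(\alpha)=\sum a_i$) let $\binom X\alpha=\prod_i\binom{X_i}{a_i}$ and $\left(\!\binom X\alpha\!\right)=\prod_i\binom{X_i+a_i-1}{a_i}$. Define $H_k=\sum_{\alpha\vdash k}\left(\!\binom X\alpha\!\right)$ and $E_l=\sum_{\alpha\vdash l}(-1)^{|\alpha|-l(\alpha)}\binom X\alpha$ in $\mathbb C[X_1,X_2,\dotsc]$ (character polynomials of $\mathrm{Sym}^k\mathbb C^n$ and $\bigwedge^l\mathbb C^n$; $H_0=E_0=1$). The signed moment of $p$ is $\{p\}_n=\frac1{n!}\sum_{\sigma\in S_n}\mathrm{sgn}(\sigma)p(X_1(\sigma),X_2(\sigma),\dotsc)$, $n\ge0$. *)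

(* Defs.v *)
From mathcomp Require Import all_boot all_order all_algebra all_fingroup.
Set Implicit Arguments. Unset Strict Implicit. Unset Printing Implicit Defensive.
Import GRing.Theory.
Local Open Scope ring_scope.

Definition cyc_count (n : nat) (s : {perm 'I_n}) (i : nat) : nat :=
  #|[set c in porbits s | #|c| == i]|.

(* A partition alpha = 1^{a_1} 2^{a_2} ... of k is encoded by its multiplicity
   vector a : {ffun 'I_k -> 'I_k.+1}, where a j is the number of parts equal
   to j.+1 (parts of a partition of k are <= k, multiplicities <= k), subject
   to sum_i i a_i = k. *)
Definition is_part (k : nat) (a : {ffun 'I_k -> 'I_k.+1}) : bool :=
  (\sum_(j < k) j.+1 * a j)%N == k.

Definition part_len (k : nat) (a : {ffun 'I_k -> 'I_k.+1}) : nat :=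
  (\sum_(j < k) a j)%N.

Definition Hval (k : nat) (X : nat -> nat) : rat :=
  \sum_(a : {ffun 'I_k -> 'I_k.+1} | is_part a)
     \prod_(j < k) ('C((X j.+1 + a j - 1)%N, a j))%:R.

Definition Eval (l : nat) (X : nat -> nat) : rat :=
  \sum_(a : {ffun 'I_l -> 'I_l.+1} | is_part a)
     (-1) ^+ (l - part_len a)%N * \prod_(j < l) ('C(X j.+1, a j))%:R.

Definition signed_moment_HE (k l n : nat) : rat :=
  (n`!%:R)^-1 * \sum_(s : {perm 'I_n})
     (-1) ^+ odd_perm s * (Hval k (cyc_count s) * Eval l (cyc_count s)).

(* Q[u,v,z] realised as nested polynomials: outer variable z, then v, then u.
   The coefficient of u^k v^l z^n of p is ((p`_n)`_l)`_k. *)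
Definition Puvz := {poly {poly {poly rat}}}.
Definition zP : Puvz := 'X.
Definition vP : Puvz := ('X)%:P.
Definition uP : Puvz := ('X)%:P%:P.
Definition coef3 (p : Puvz) (k l n : nat) : rat := ((p`_n)`_l)`_k.

(* Truncation at level K of prod_{j>=0}(1+u^j z) / prod_{j>=0}(1-u^j v z):
   factors j < K, and 1/(1-x) expanded as sum_{m<K} x^m. The formal power
   series RHS is the (u,v,z)-adic limit of these truncations. *)
Definition rhs_trunc (K : nat) : Puvz :=
  (\prod_(j < K) (1 + uP ^+ j * zP)) *
  (\prod_(j < K) \sum_(m < K) (uP ^+ j * vP * zP) ^+ m).

(* Main.v *)
Require Import Defs.
From mathcomp Require Import all_boot all_order all_algebra all_fingroup.
From mathcomp Require Import zify ring lra.
Set Implicit Arguments. Unset Strict Implicit. Unset Printing Implicit Defensive.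
Import GRing.Theory Num.Theory.
Local Open Scope ring_scope.
Section Comb.
Variables (T : finType) (R : comRingType).
Implicit Types (s t : {perm T}) (A B : {set T}) (F G : nat -> R).

Definition cyc s A := porbit s @: A.
Definition Phi F A := \sum_(s | perm_on A s) \prod_(c in cyc s A) F #|c|.

Lemma Phi_ext F G A : F =1 G -> Phi F A = Phi G A.
Proof. by move=> FG; apply: eq_bigr => s _; apply: eq_bigr => c _; rewrite FG. Qed.

Lemma perm_on_N A s : perm_on A s -> s \in ('N(A | 'P))%g.
Proof. by move=> hs; apply/astabsP => x; rewrite /aperm perm_closed. Qed.

Lemma porbit_stable s B x y :
  s \in ('N(B | 'P))%g -> x \in B -> y \in porbit s x -> y \in B.
Proof.
move=> /astabsP sB xB /porbitP [i ->]; rewrite permX.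
elim: i => //= i IH; by have := sB (iter i s x); rewrite /aperm => ->.
Qed.

Lemma porbit_agree s t (D : {set T}) x :
  {in D, forall y, t y = s y} -> {in D, forall y, s y \in D} -> x \in D ->
  porbit t x = porbit s x.
Proof.
move=> ts sD xD.
have E i : (t ^+ i)%g x = (s ^+ i)%g x /\ (s ^+ i)%g x \in D.
  elim: i => [|i [IH1 IH2]]; first by rewrite !expg0 !perm1.
  by rewrite !expgSr !permM IH1 ts // sD.
apply/setP => y; apply/porbitP/porbitP => -[i ->]; exists i; by case: (E i).
Qed.

Lemma cover_cyc s A : s \in ('N(A | 'P))%g -> cover (cyc s A) = A.
Proof.
move=> sA; apply/setP => x; apply/bigcupP/idP.
  by case=> c /imsetP[y yA ->] xc; exact: porbit_stable xc.
by move=> xA; exists (porbit s x); [exact: imset_f | exact: porbit_id].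
Qed.

Lemma porbit_eq s x y : x \in porbit s y -> porbit s x = porbit s y.
Proof. by move=> h; apply/eqP; rewrite eq_porbit_mem. Qed.

Lemma porbit_s s x : s x \in porbit s x.
Proof. by have := mem_porbit s 1 x; rewrite expg1. Qed.

Lemma sum_card_cyc s A : s \in ('N(A | 'P))%g -> (\sum_(c in cyc s A) #|c| = #|A|)%N.
Proof.
move=> sA; rewrite -sum1_card (partition_big_imset (porbit s)) /=.
apply: eq_bigr => c /imsetP[y yA ->]; rewrite sum1_card.
apply: eq_card => x; rewrite unfold_in; apply/idP/idP => [xy|/andP[_ /eqP <-]]; last exact: porbit_id.
by rewrite unfold_in (porbit_stable sA yA xy) (porbit_eq xy) eqxx.
Qed.

Lemma cyc_cover s A (C : {set {set T}}) : C \subset cyc s A -> cyc s (cover C) = C.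
Proof.
move=> /subsetP CA; apply/setP => c; apply/imsetP/idP.
  case=> x /bigcupP[c' c'C xc'] ->.
  by have /imsetP[y _ Ey] := CA _ c'C; rewrite Ey in xc'; rewrite (porbit_eq xc') -Ey.
move=> cC; have /imsetP[y _ Ey] := CA _ cC; exists y => //.
by apply/bigcupP; exists c => //; rewrite Ey porbit_id.
Qed.

Lemma stable_iff s A B : s \in ('N(A | 'P))%g ->
  ((cyc s B \subset cyc s A) && (cover (cyc s B) == B)) =
  (B \subset A) && (s \in ('N(B | 'P))%g).
Proof.
move=> sA; apply/andP/andP => [[/subsetP BA /eqP cB]|[BA sB]].
  have sub x : x \in B -> porbit s x \subset B.
    move=> xB; apply/subsetP => y yx; rewrite -cB; apply/bigcupP; exists (porbit s x) => //; exact: imset_f.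
  split.
    apply/subsetP => x xB.
    have /imsetP[a aA Ea] := BA _ (imset_f (porbit s) xB).
    by apply: (porbit_stable sA aA); rewrite -Ea porbit_id.
  apply/astabsP => x; rewrite /aperm; apply/idP/idP => h.
    apply: (subsetP (sub _ h)); rewrite porbit_sym.
    exact: porbit_s.
  by apply: (subsetP (sub _ h)); exact: porbit_s.
split; first exact: imsetS.
by rewrite cover_cyc.
Qed.

Lemma cyc_diff s A B : s \in ('N(B | 'P))%g -> B \subset A ->
  cyc s A :\: cyc s B = cyc s (A :\: B).
Proof.
move=> sB BA; apply/setP => c; rewrite inE; apply/andP/imsetP.
  case=> cnB /imsetP[x xA Ec]; exists x => //; rewrite inE xA andbT.
  by apply: contra cnB => xB; rewrite Ec imset_f.
case=> x /setDP[xA xnB] ->; split; last exact: imset_f.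
apply/imsetP => -[y yB E]; move/negP: xnB; apply.
by apply: (porbit_stable sB yB); rewrite -E porbit_id.
Qed.


Lemma prod_set_add (I : finType) (P : {set I}) (f g : I -> R) :
  \prod_(c in P) (f c + g c) =
  \sum_(C : {set I} | C \subset P) \prod_(c in C) f c * \prod_(c in P :\: C) g c.
Proof.
pose f' c := if c \in P then f c else 0.
pose g' c := if c \in P then g c else 1.
rewrite big_mkcond /=.
transitivity (\prod_c (f' c + g' c)).
  by apply: eq_bigr => c _; rewrite /f' /g'; case: (c \in P); rewrite ?add0r.
rewrite bigA_distr (bigID (fun C : {set I} => C \subset P)) /=.
rewrite [X in _ + X]big1 ?addr0.
  apply: eq_bigr => C CP.
  rewrite [\prod_(c in C) _]big_mkcond [\prod_(c in P :\: C) _]big_mkcond -big_split /=.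
  apply: eq_bigr => c _; rewrite /f' /g' inE.
  case cC: (c \in C); case cP: (c \in P) => //=; rewrite ?mulr1 ?mul1r //.
  by rewrite (subsetP CP) in cP.
move=> C /subsetPn [c cC cnP].
by rewrite (bigD1 c) //= cC /f' (negPf cnP) mul0r.
Qed.

Lemma perm_onS A B s : B \subset A -> perm_on B s -> perm_on A s.
Proof. by move=> BA hs; apply: subset_trans hs BA. Qed.

Lemma restr_mul A B s : B \subset A -> perm_on A s -> s \in ('N(B | 'P))%g ->
  (restr_perm B s * restr_perm (A :\: B) s)%g = s.
Proof.
move=> BA hs sB; have sA := perm_on_N hs.
have sAB : s \in ('N(A :\: B | 'P))%g.
  by apply: (subsetP (astabsD _ _ _)); rewrite inE sA sB.
apply/permP => x; rewrite permM.
case xB: (x \in B).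
  rewrite (restr_permE sB xB) (out_perm (restr_perm_on _ _)) //.
  by rewrite inE negb_and negbK; have := astabsP sB x; rewrite /aperm xB => ->.
rewrite [restr_perm B s x](out_perm (restr_perm_on _ _)) ?xB //.
case xA: (x \in A).
  by rewrite (restr_permE sAB) // inE xB xA.
rewrite (out_perm (restr_perm_on _ _)) ?inE ?xA ?andbF //.
by rewrite (out_perm hs) // xA.
Qed.

Section MulProps.
Variables (A B : {set T}) (b g : {perm T}).
Hypotheses (BA : B \subset A) (hb : perm_on B b) (hg : perm_on (A :\: B) g).
Local Notation bg := (b * g)%g.

Lemma bg_B x : x \in B -> bg x = b x.
Proof.
move=> xB; rewrite permM (out_perm hg) // inE negb_and negbK.
by rewrite (perm_closed _ hb) xB.
Qed.

Lemma bg_AB x : x \in A :\: B -> bg x = g x.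
Proof.
move=> xAB; rewrite permM (out_perm hb) //.
by move: xAB; rewrite inE => /andP[].
Qed.

Lemma bg_on : perm_on A bg.
Proof. by apply: perm_onM; [apply: perm_onS hb | apply: perm_onS hg; apply: subsetDl]. Qed.

Lemma bg_N : bg \in ('N(B | 'P))%g.
Proof.
apply/astabsP => x; change ((bg x \in B) = (x \in B)).
case xB: (x \in B); first by rewrite bg_B // (perm_closed _ hb).
rewrite permM (out_perm hb) ?xB //.
case xAB: (x \in A :\: B).
  by apply/negbTE; move: (xAB); rewrite -(perm_closed _ hg) inE => /andP[].
by rewrite (out_perm hg) ?xAB.
Qed.

Lemma bg_restr1 : restr_perm B bg = b.
Proof.
apply/permP => x; case xB: (x \in B); first by rewrite (restr_permE bg_N xB) bg_B.
by rewrite !(out_perm (restr_perm_on _ _)) ?xB // (out_perm hb) ?xB.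
Qed.

Lemma bg_restr2 : restr_perm (A :\: B) bg = g.
Proof.
have N2 : bg \in ('N(A :\: B | 'P))%g.
  by apply: (subsetP (astabsD _ _ _)); rewrite inE (perm_on_N bg_on) bg_N.
apply/permP => x; case xB: (x \in A :\: B); first by rewrite (restr_permE N2 xB) bg_AB.
by rewrite !(out_perm (restr_perm_on _ _)) ?xB // (out_perm hg) ?xB.
Qed.

Lemma bg_cyc1 : cyc bg B = cyc b B.
Proof.
apply: eq_in_imset => x xB; apply: porbit_agree xB.
  by move=> y yB; rewrite bg_B.
by move=> y yB; rewrite (perm_closed _ hb).
Qed.

Lemma bg_cyc2 : cyc bg (A :\: B) = cyc g (A :\: B).
Proof.
apply: eq_in_imset => x xB; apply: porbit_agree xB.
  by move=> y yB; rewrite bg_AB.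
by move=> y yB; rewrite (perm_closed _ hg).
Qed.

End MulProps.

Lemma sum_stable F G A B : B \subset A ->
  \sum_(s | perm_on A s && (s \in ('N(B | 'P))%g))
     (\prod_(c in cyc s B) F #|c| * \prod_(c in cyc s (A :\: B)) G #|c|)
  = Phi F B * Phi G (A :\: B).
Proof.
move=> BA; rewrite /Phi big_distrlr /= pair_big_dep /=.
rewrite (reindex_onto (fun p : {perm T} * {perm T} => (p.1 * p.2)%g)
           (fun s => (restr_perm B s, restr_perm (A :\: B) s))) /=; last first.
  by move=> s /andP[hs sB]; apply: restr_mul.
have Hf b g : (perm_on A (b * g)%g && ((b * g)%g \in ('N(B | 'P))%g)) &&
   ((restr_perm B (b * g)%g, restr_perm (A :\: B) (b * g)%g) == (b, g))
   = perm_on B b && perm_on (A :\: B) g.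
  apply/idP/idP.
    by move=> /andP[_ /eqP [<- <-]]; rewrite !restr_perm_on.
  move=> /andP[hb hg].
  by rewrite (bg_on BA hb hg) (bg_N hb hg) (bg_restr1 hb hg) (bg_restr2 BA hb hg) eqxx.
apply: eq_big => [[b g]|[b g]]; rewrite /= ?Hf //.
by move=> /andP[hb hg]; rewrite (bg_cyc1 hb hg) (bg_cyc2 hb hg).
Qed.

Lemma Phi_add F G A :
  Phi (fun i => F i + G i) A = \sum_(B : {set T} | B \subset A) Phi F B * Phi G (A :\: B).
Proof.
transitivity (\sum_(s | perm_on A s) \sum_(B : {set T} | (B \subset A) && (s \in ('N(B | 'P))%g))
   (\prod_(c in cyc s B) F #|c| * \prod_(c in cyc s (A :\: B)) G #|c|)).
  apply: eq_bigr => s hs; rewrite prod_set_add.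
  rewrite (reindex_onto (cyc s) (fun C => cover C)) /=; last by move=> C; exact: cyc_cover.
  have sA := perm_on_N hs.
  apply: eq_big => B; first by rewrite stable_iff.
  by rewrite stable_iff // => /andP[BA sB]; rewrite cyc_diff.
rewrite (exchange_big_dep (fun B => B \subset A)) /=; last by move=> s B _ /andP[].
by apply: eq_bigr => B BA; rewrite -sum_stable //; apply: eq_bigl => s; rewrite BA.
Qed.


Lemma sum_subsets_size (A : {set T}) (h : nat -> R) :
  \sum_(B : {set T} | B \subset A) h #|B| = \sum_(i < #|A|.+1) h i *+ 'C(#|A|, i).
Proof.
rewrite (partition_big (fun B : {set T} => inord #|B| : 'I_#|A|.+1) xpredT) //=.
apply: eq_bigr => i _.
rewrite -cards_draws -sumr_const.
apply: eq_big => B; last first.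
  by move=> /andP[BA /eqP <-]; rewrite inordK // ltnS subset_leq_card.
rewrite inE; case BA: (B \subset A) => //=.
by rewrite -val_eqE /= inordK // ltnS subset_leq_card.
Qed.

Lemma Phi_add_size F G (f g : nat -> R) A :
  (forall B, Phi F B = f #|B|) -> (forall B, Phi G B = g #|B|) ->
  Phi (fun i => F i + G i) A = \sum_(i < #|A|.+1) (f i * g (#|A| - i)%N) *+ 'C(#|A|, i).
Proof.
move=> hF hG; rewrite Phi_add.
rewrite (eq_bigr (fun B : {set T} => f #|B| * g (#|A| - #|B|)%N)) => [|B BA].
  exact: (sum_subsets_size A (fun x => f x * g (#|A| - x)%N)).
by rewrite hF hG cardsDS.
Qed.

Lemma Phi0 A : Phi (fun _ => 0) A = (#|A| == 0)%:R.
Proof.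
case: (set_0Vmem A) => [-> | [x xA]].
  rewrite cards0 /Phi (big_pred1 1%g) => [|s]; first by rewrite /cyc imset0 big_set0.
  apply/idP/eqP => [hs|->]; last exact: perm_on1.
  by apply: perm_on_id hs _; rewrite cards0.
rewrite cards_eq0; case: eqP => [A0|_]; first by rewrite A0 inE in xA.
rewrite /Phi big1 // => s hs; rewrite (bigD1 (porbit s x)) //=.
by rewrite mul0r. exact: imset_f.
Qed.

Lemma Phi_bos (w : R) A : Phi (fun i => w ^+ i) A = w ^+ #|A| *+ #|A|`!.
Proof.
rewrite /Phi (eq_bigr (fun _ => w ^+ #|A|)) => [|s hs]; last first.
  by rewrite prodrXr sum_card_cyc // perm_on_N.
by rewrite -card_perm -sumr_const.
Qed.

Lemma sum_sign_on A : \sum_(s | perm_on A s) ((-1) ^+ odd_perm s : R) = (#|A| <= 1)%:R.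
Proof.
case: leqP => hA.
  rewrite (big_pred1 1%g) ?odd_perm1 // => s.
  apply/idP/eqP => [hs|->]; [exact: perm_on_id hs hA | exact: perm_on1].
have [x [y [xA yA xy]]] : exists x y, [/\ x \in A, y \in A & x != y].
  by case/card_gt1P: hA => x [y] [? ? ?]; exists x, y.
have -> : \sum_(s | perm_on A s) ((-1) ^+ odd_perm s : R) =
   (\sum_(s | perm_on A s) ((-1) ^+ odd_perm s : int))%:~R.
  by rewrite rmorph_sum; apply: eq_bigr => s _; rewrite rmorph_sign.
set S := (\sum_(s | _) _)%R.
suff -> : S = 0 by [].
have tA : perm_on A (tperm x y).
  by apply: perm_onS (tperm_on x y); apply/subsetP => z; rewrite !inE => /orP[] /eqP ->.
have E : S = - S.
  rewrite {1}/S (reindex_inj (mulgI (tperm x y))) /=.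
  rewrite -sumrN; apply: eq_big => s.
    apply/idP/idP => h; last exact: perm_onM.
    by rewrite -(mulKg (tperm x y) s) tpermV; apply: perm_onM.
  by move=> _; rewrite odd_mul_tperm xy /= signrN.
move/eqP: E; rewrite -subr_eq0 opprK -mulr2n mulrn_eq0 /=.
by move/eqP.
Qed.

Lemma porbit_out A s x : perm_on A s -> x \notin A -> porbit s x = [set x].
Proof.
move=> hs xA; apply/setP => y; rewrite inE; apply/porbitP/eqP => [[i ->]|->].
  by rewrite permX; elim: i => //= i ->; rewrite (out_perm hs).
by exists 0; rewrite expg0 perm1.
Qed.

Lemma card_porbits_on A s : perm_on A s ->
  #|porbits s| = (#|cyc s A| + #|~: A|)%N.
Proof.
move=> hs.
have -> : porbits s = cyc s setT.
  by apply/setP => c; apply/imsetP/imsetP => -[x _ ->]; exists x.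
have sT : s \in ('N(setT | 'P))%g by apply: perm_on_N; apply/subsetP => z; rewrite inE.
rewrite -(cardsID (cyc s A) (cyc s setT)) (setIidPr _); last by apply: imsetS; apply: subsetT.
rewrite cyc_diff ?subsetT ?perm_on_N // setTD; congr (_ + _)%N.
apply: card_in_imset => x1 x2 h1 h2; rewrite !(porbit_out hs) -?in_setC //.
by move/setP/(_ x1); rewrite !inE eqxx => /esym/eqP.
Qed.

Lemma Phi_fer (w : R) A : Phi (fun i => - (- w) ^+ i) A = (#|A| <= 1)%:R * w ^+ #|A|.
Proof.
rewrite /Phi -sum_sign_on big_distrl /=; apply: eq_bigr => s hs.
have -> : \prod_(c in cyc s A) - (- w) ^+ #|c| =
          \prod_(c in cyc s A) ((-1) * (-1) ^+ #|c| * w ^+ #|c|).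
  by apply: eq_bigr => c _; rewrite [(- w) ^+ _]exprNn mulN1r mulNr.
rewrite !big_split /= prodr_const !prodrXr sum_card_cyc ?perm_on_N //.
rewrite -exprD; congr (_ * _).
rewrite /odd_perm signr_addb !signr_odd -exprD (card_porbits_on hs) -(cardsC A).
rewrite -[LHS]signr_odd -[RHS]signr_odd; congr (_ ^+ (nat_of_bool _)).
rewrite !oddD; by case: (odd #|A|); case: (odd #|~: A|); case: (odd #|cyc s A|).
Qed.

Lemma coef_expo (P Q : {poly R}) m :
  (P * Q)`_m *+ m`! =
  \sum_(i < m.+1) ((P`_i *+ i`!) * (Q`_(m - i) *+ (m - i)`!)) *+ 'C(m, i).
Proof.
rewrite coefM -sumrMnl; apply: eq_bigr => i _.
rewrite mulrnAl mulrnAr -!mulrnA; congr (_ *+ _).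
rewrite -(bin_fact (ltnSE (ltn_ord i))); lia.
Qed.

Lemma Phi_letter (wb wf : R) K (hK : (#|T| < K)%N) B :
  Phi (fun i => wb ^+ i + - (- wf) ^+ i) B =
  ((\sum_(m < K) (wb *: 'X) ^+ m) * (1 + wf *: 'X))`_#|B| *+ #|B|`!.
Proof.
rewrite (@Phi_add_size _ _ (fun i => wb ^+ i *+ i`!)
            (fun i => (i <= 1)%:R * wf ^+ i)); last 2 first.
- by move=> C; exact: Phi_bos.
- by move=> C; exact: Phi_fer.
rewrite coef_expo; apply: eq_bigr => i _; congr (_ * _ *+ _).
  have iK : (i < K)%N.
    by apply: leq_ltn_trans hK; apply: leq_trans (max_card B); rewrite -ltnS.
  congr (_ *+ _); rewrite coef_sum (bigD1 (Ordinal iK)) //= big1 ?addr0.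
    by rewrite exprZn coefZ coefXn eqxx mulr1.
  move=> m /eqP mi; rewrite exprZn coefZ coefXn.
  by case: eqP => [im|]; rewrite ?mulr0 //; case: mi; apply: val_inj.
rewrite coefD coef1 coefZ coefX.
case: (#|B| - i)%N => [|[|j]] /=; rewrite ?fact0 ?expr0 ?expr1 ?mulr0 ?addr0 ?add0r ?mulr1 ?mul1r //.
by rewrite mul0r mul0rn.
Qed.

Lemma Phi_letters (wb wf : nat -> R) K M (hK : (#|T| < K)%N) B :
  Phi (fun i => \sum_(a < M) (wb a ^+ i + - (- wf a) ^+ i)) B =
  (\prod_(a < M) ((\sum_(m < K) (wb a *: 'X) ^+ m) * (1 + wf a *: 'X)))`_#|B|
    *+ #|B|`!.
Proof.
elim: M B => [|M IH] B.
  rewrite (@Phi_ext _ (fun _ => 0)) ?Phi0 => [|i]; last by rewrite big_ord0.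
  by rewrite big_ord0 coef1; case: (#|B|) => [|m] //=; rewrite mul0rn.
rewrite (@Phi_ext _ (fun i => \sum_(a < M) (wb a ^+ i + - (- wf a) ^+ i)
                           + (wb M ^+ i + - (- wf M) ^+ i))); last first.
  by move=> i; rewrite big_ord_recr.
rewrite (@Phi_add_size _ _
   (fun i => (\prod_(a < M) ((\sum_(m < K) (wb a *: 'X) ^+ m) * (1 + wf a *: 'X)))`_i *+ i`!)
   (fun i => ((\sum_(m < K) (wb M *: 'X) ^+ m) * (1 + wf M *: 'X))`_i *+ i`!)).
- by rewrite [in RHS]big_ord_recr /= [RHS]coef_expo.
- by move=> C; exact: IH.
- by move=> C; exact: Phi_letter.
Qed.

End Comb.

Definition eqk (k : nat) (p q : {poly rat}) := forall j, (j <= k)%N -> p`_j = q`_j.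

Lemma eqk_mul k p p' q q' : eqk k p p' -> eqk k q q' -> eqk k (p * q) (p' * q').
Proof.
move=> hp hq j jk; rewrite !coefM; apply: eq_bigr => i _.
have ij : (i <= j)%N by rewrite -ltnS.
by rewrite hp ?hq //; lia.
Qed.

Lemma eqk_prod k N (F G : nat -> {poly rat}) : (forall i, eqk k (F i) (G i)) ->
  eqk k (\prod_(i < N) F i) (\prod_(i < N) G i).
Proof.
move=> h; elim/big_ind2: _ => [j _ // | x1 x2 y1 y2 hx hy | i _]; last exact: h.
exact: eqk_mul.
Qed.

Lemma prod_scaleX k (c : 'I_k -> rat) (e : 'I_k -> nat) :
  \prod_(i < k) (c i *: 'X^(e i)) = (\prod_(i < k) c i) *: 'X^(\sum_(i < k) e i).
Proof.
rewrite -mul_polyC rmorph_prod -prodrXr -big_split /=.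
by apply: eq_bigr => i _; rewrite mul_polyC.
Qed.

Lemma coef_prod_comp (k N : nat) (f : nat -> {poly rat}) : (k <= N)%N ->
  (forall i, (f i)`_0 = 1) ->
  (\prod_(i < N) (f i.+1 \Po 'X^(i.+1)))`_k =
  \sum_(a : {ffun 'I_k -> 'I_k.+1} | is_part a) \prod_(j < k) (f j.+1)`_(a j).
Proof.
move=> kN f0.
pose Tp (i : nat) : {poly rat} :=
  if (i < k)%N then \sum_(m < k.+1) (f i.+1)`_m *: 'X^(i.+1 * m) else 1.
have E1 : eqk k (\prod_(i < N) (f i.+1 \Po 'X^(i.+1))) (\prod_(i < N) Tp i).
  apply: (@eqk_prod k N (fun i => f i.+1 \Po 'X^(i.+1)) Tp) => i j jk.
  rewrite coef_comp_poly_Xn // /Tp.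
  case: (ltnP i k) => ik.
    rewrite coef_sum.
    case: ifP => dv.
      have qk : (j %/ i.+1 < k.+1)%N.
        by rewrite ltnS; apply: leq_trans jk; apply: leq_div.
      rewrite (bigD1 (Ordinal qk)) //= big1 ?addr0.
        by rewrite coefZ coefXn mulnC divnK // eqxx mulr1.
      move=> m /eqP mq; rewrite coefZ coefXn.
      case: eqP => [jm|]; rewrite ?mulr0 //; case: mq; apply: val_inj => /=.
      by rewrite jm mulKn.
    rewrite big1 // => m _; rewrite coefZ coefXn.
    case: eqP => [jm|]; rewrite ?mulr0 //.
    by rewrite jm dvdn_mulr in dv.
  rewrite coef1; case: j jk => [|j] jk /=; first by rewrite f0.
  have -> : (i.+1 %| j.+1)%N = false.
    apply/negP => dv.
    have := dvdn_leq (ltn0Sn j) dv; lia.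
  by [].
rewrite E1 //.
have -> : \prod_(i < N) Tp i = \prod_(i < k) \sum_(m < k.+1) (f i.+1)`_m *: 'X^(i.+1 * m).
  rewrite (big_ord_widen N (fun i => \sum_(m < k.+1) (f i.+1)`_m *: 'X^(i.+1 * m)) kN).
  rewrite [RHS]big_mkcond; apply: eq_bigr => i _; rewrite /Tp; by case: ifP.
rewrite bigA_distr_bigA /= coef_sum [RHS]big_mkcond /=.
apply: eq_bigr => a _.
rewrite (prod_scaleX (fun i => (f i.+1)`_(a i)) (fun i => (i.+1 * a i)%N)) coefZ coefXn.
rewrite /is_part eq_sym; case: eqP => _; by rewrite ?mulr1 ?mulr0.
Qed.

Lemma coef_geo K j : ((\sum_(a < K) 'X^a : {poly rat})`_j = (j < K)%N%:R).
Proof.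
rewrite coef_sum; case: ltnP => jK.
  rewrite (bigD1 (Ordinal jK)) //= big1 ?addr0 ?coefXn ?eqxx //.
  move=> a /eqP aj; rewrite coefXn; case: eqP => // ja; case: aj; exact: val_inj.
by rewrite big1 // => a _; rewrite coefXn; case: eqP => // ja; move: (ltn_ord a); lia.
Qed.

Lemma hockey X m : (\sum_(j < m.+1) 'C(X + j - 1, j))%N = 'C(X + m, m).
Proof.
elim: m => [|m IH]; first by rewrite big_ord1 !bin0.
rewrite big_ord_recr /= IH.
have -> : (X + m.+1 - 1 = X + m)%N by lia.
by rewrite addnS binS addnC.
Qed.

Lemma coef_geoX K X m : (m < K)%N ->
  (((\sum_(a < K) 'X^a : {poly rat}) ^+ X)`_m = 'C(X + m - 1, m)%:R).
Proof.
elim: X m => [|X IH] m mK.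
  rewrite expr0 coef1 add0n; case: m mK => [|m] _ //=.
  by rewrite bin_small //; lia.
rewrite exprS coefM.
rewrite (eq_bigr (fun j : 'I_m.+1 => 'C(X + (m - j) - 1, m - j)%:R)); last first.
  move=> j _; rewrite coef_geo IH; last by lia.
  by rewrite (_ : (j < K)%N) ?mul1r //; move: (ltn_ord j); lia.
rewrite -natr_sum.
rewrite (reindex_inj rev_ord_inj) /=.
rewrite (eq_bigr (fun j : 'I_m.+1 => 'C(X + j - 1, j))) => [|j _]; last first.
  by rewrite subKn // -ltnS.
by rewrite hockey; congr (_%:R); congr 'C(_, _); lia.
Qed.

Lemma coef_binX (c : rat) X m :
  (((1 + c *: 'X : {poly rat}) ^+ X)`_m = 'C(X, m)%:R * c ^+ m).
Proof.
elim: X m => [|X IH] m.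
  by rewrite expr0 coef1; case: m => [|m] //=; rewrite ?mul1r // bin0n mul0r.
rewrite exprS mulrDl mul1r coefD -scalerAl coefZ coefXM IH.
case: m => [|m] /=; first by rewrite !bin0 mulr0 addr0.
by rewrite IH binS natrD mulrDl exprS; ring.
Qed.

Lemma comp_exp (p q : {poly rat}) m : (p \Po q) ^+ m = (p ^+ m) \Po q.
Proof.
elim: m => [|m IH]; first by rewrite !expr0 -polyC1 comp_polyC.
by rewrite !exprS comp_polyM IH.
Qed.

Lemma geo_comp K i :
  (\sum_(a < K) 'X^a : {poly rat}) \Po 'X^i = \sum_(a < K) ('X^i) ^+ a.
Proof.
rewrite (big_morph (fun p => p \Po 'X^i) (fun p1 p2 => comp_polyD p1 p2 'X^i) (comp_poly0 _)).
by apply: eq_bigr => a _; rewrite -comp_exp comp_polyX.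
Qed.

Lemma porbits_cyc n (s : {perm 'I_n}) : porbits s = cyc s setT.
Proof. by apply/setP => c; apply/imsetP/imsetP => -[x _ ->]; exists x. Qed.

Lemma card_porbit_le n (s : {perm 'I_n}) c : c \in porbits s -> (0 < #|c| <= n)%N.
Proof.
move=> /imsetP[x _ ->]; rewrite lt0n card_porbit_neq0 /=.
by rewrite -[X in (_ <= X)%N](card_ord n) max_card.
Qed.

Lemma cyc_count_big n (s : {perm 'I_n}) i : (n < i)%N -> cyc_count s i = 0%N.
Proof.
move=> ni; apply/eqP; rewrite cards_eq0; apply/eqP/setP => c; rewrite !inE.
apply/negbTE; apply/negP => /andP[/card_porbit_le /andP[_ h] /eqP ci]; lia.
Qed.

Lemma group_cycles n (s : {perm 'I_n}) (V : comNzRingType) (F : nat -> V) :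
  \prod_(c in porbits s) F #|c| = \prod_(i < n) F i.+1 ^+ cyc_count s i.+1.
Proof.
rewrite (partition_big (fun c : {set 'I_n} => inord #|c| : 'I_n.+1) xpredT) //=.
rewrite big_ord_recl /= [X in X * _](_ : _ = 1) ?mul1r.
  apply: eq_bigr => i _.
  rewrite /cyc_count -prodr_const; apply: eq_big => c; last first.
    move=> /andP[/card_porbit_le /andP[h1 h2] /eqP ci]; congr F.
    by move/(congr1 val): ci; rewrite /= inordK //; lia.
  rewrite inE; case cP: (c \in porbits s) => //=.
  have /andP[_ h] := card_porbit_le cP.
  by rewrite -val_eqE /= inordK.
apply: big1 => c /andP[/card_porbit_le /andP[h1 h2] /eqP ci].
by move/(congr1 val): ci; rewrite /= inordK // => ci; by rewrite ci in h1.
Qed.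

Lemma widen_prod n k (g : nat -> {poly rat}) :
  (forall i, (n <= i)%N -> g i = 1) -> \prod_(i < n) g i = \prod_(i < n + k) g i.
Proof.
move=> g1; rewrite big_split_ord /= [X in _ = _ * X]big1 ?mulr1 // => i _.
by apply: g1; rewrite leq_addr.
Qed.

Lemma Hcoef n (s : {perm 'I_n}) k K : (k < K)%N ->
  (\prod_(c in porbits s) ((\sum_(a < K) 'X^a : {poly rat}) \Po 'X^#|c|))`_k
  = Hval k (cyc_count s).
Proof.
move=> kK; set geo := (\sum_(a < K) 'X^a : {poly rat}).
rewrite (group_cycles s (fun i => geo \Po 'X^i)).
rewrite (@widen_prod n k (fun i => (geo \Po 'X^(i.+1)) ^+ cyc_count s i.+1)); last first.
  by move=> i ni; rewrite cyc_count_big ?expr0 //.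
rewrite (eq_bigr (fun i : 'I_(n + k) => (geo ^+ cyc_count s i.+1) \Po 'X^(i.+1)));
  last by move=> i _; rewrite comp_exp.
rewrite (@coef_prod_comp k (n + k) (fun i => geo ^+ cyc_count s i)) ?leq_addl //; last first.
  by move=> i; rewrite coef_geoX ?bin0 //; lia.
apply: eq_bigr => a _; apply: eq_bigr => j _; rewrite coef_geoX //.
by apply: leq_ltn_trans kK; rewrite -ltnS.
Qed.

Lemma Ecoef n (s : {perm 'I_n}) l :
  (\prod_(c in porbits s) (1 - (- 'X) ^+ #|c| : {poly rat}))`_l = Eval l (cyc_count s).
Proof.
pose b (i : nat) : {poly rat} := 1 + (- (-1) ^+ i) *: 'X.
have Eb i : (1 - (- 'X) ^+ i : {poly rat}) = b i \Po 'X^i.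
  rewrite /b comp_polyD comp_polyZ comp_polyX -polyC1 comp_polyC polyC1.
  by rewrite [(- 'X) ^+ _]exprNn -mul_polyC rmorphN rmorph_sign mulNr.
rewrite (eq_bigr (fun c : {set 'I_n} => b #|c| \Po 'X^#|c|)) => [|c _]; last exact: Eb.
rewrite (group_cycles s (fun i => b i \Po 'X^i)).
rewrite (@widen_prod n l (fun i => (b i.+1 \Po 'X^(i.+1)) ^+ cyc_count s i.+1)); last first.
  by move=> i ni; rewrite cyc_count_big ?expr0 //.
rewrite (eq_bigr (fun i : 'I_(n + l) => (b i.+1 ^+ cyc_count s i.+1) \Po 'X^(i.+1)));
  last by move=> i _; rewrite comp_exp.
rewrite (@coef_prod_comp l (n + l) (fun i => b i ^+ cyc_count s i)) ?leq_addl //; last first.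
  by move=> i; rewrite coef_binX bin0 expr0 mulr1.
rewrite /Eval; apply: eq_bigr => a pa.
rewrite (eq_bigr (fun j : 'I_l => 'C(cyc_count s j.+1, a j)%:R * ((-1) ^+ (j * a j)%N)));
  last first.
  move=> j _; rewrite coef_binX; congr (_ * _).
  by rewrite exprS mulN1r opprK -exprM.
rewrite big_split /= mulrC prodrXr; congr (_ * _); congr (_ ^+ _).
move: pa; rewrite /is_part /part_len => /eqP pa.
have : (\sum_(j < l) j.+1 * a j = \sum_(j < l) j * a j + \sum_(j < l) a j)%N.
  by rewrite -big_split /=; apply: eq_bigr => j _; rewrite mulSn addnC.
move=> E; set S1 := (\sum_(i < l) i * a i)%N in E *.
set L := (\sum_(j < l) a j)%N in E *; rewrite pa in E; lia.
Qed.

Definition uR : {poly {poly rat}} := ('X : {poly rat})%:P.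
Definition wbR (a : nat) : {poly {poly rat}} := uR ^+ a * 'X.
Definition wfR (a : nat) : {poly {poly rat}} := uR ^+ a.
Definition GK (K i : nat) : {poly {poly rat}} :=
  \sum_(a < K) (wbR a ^+ i + - (- wfR a) ^+ i).

Lemma sign_sq (V : pzRingType) i : ((-1) ^+ i * (-1) ^+ i : V) = 1.
Proof. by rewrite -exprD -signr_odd addnn odd_double. Qed.

Lemma GK_factor K i :
  GK K i = (-1) ^+ i.+1 * map_poly polyC (1 - (- 'X) ^+ i : {poly rat})
           * ((\sum_(a < K) 'X^a : {poly rat}) \Po 'X^i)%:P.
Proof.
rewrite geo_comp rmorph_sum /= big_distrr /GK; apply: eq_bigr => a _.
rewrite /wbR /wfR rmorphB rmorph1 /= rmorphXn /= rmorphN /= map_polyX.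
rewrite !rmorphXn /= -/uR.
rewrite exprMn [(- _) ^+ i]exprNn [(- 'X) ^+ i]exprNn exprS.
rewrite [uR ^+ a ^+ i]exprAC.
set x := (uR ^+ i) ^+ a; set y := ('X : {poly {poly rat}}) ^+ i.
set e := ((-1) ^+ i : {poly {poly rat}}).
have ee : e * e = 1 by rewrite sign_sq.
transitivity (-1 * e * x + (e * e) * y * x); last by ring.
rewrite ee; ring.
Qed.

Lemma sign_cycles n (s : {perm 'I_n}) :
  \prod_(c in porbits s) ((-1) ^+ #|c|.+1 : {poly {poly rat}}) = (-1) ^+ odd_perm s.
Proof.
rewrite prodrXr.
have sT : perm_on setT s by apply/subsetP => x; rewrite inE.
have -> : (\sum_(c in porbits s) #|c|.+1 = n + #|porbits s|)%N.
  rewrite (eq_bigr (fun c : {set 'I_n} => #|c| + 1)%N) => [|c _]; last by rewrite addn1.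
  rewrite big_split /= sum1_card; congr (_ + _)%N.
  by rewrite porbits_cyc sum_card_cyc ?perm_on_N // cardsT card_ord.
by rewrite /odd_perm signr_addb !signr_odd -exprD card_ord.
Qed.

Lemma per_perm n (s : {perm 'I_n}) k l K : (k < K)%N ->
  ((\prod_(c in porbits s) GK K #|c|)`_l)`_k =
  (-1) ^+ odd_perm s * (Hval k (cyc_count s) * Eval l (cyc_count s)).
Proof.
move=> kK.
under eq_bigr => c _ do rewrite GK_factor.
rewrite !big_split /= sign_cycles.
rewrite -rmorph_prod -rmorph_prod.
have -> : ((-1) ^+ odd_perm s : {poly {poly rat}}) =
          ((((-1) ^+ odd_perm s : rat)%:P)%:P) by rewrite !rmorph_sign.
rewrite coefMC coefCM coef_map /= -polyCM coefCM Hcoef // Ecoef.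
by rewrite mulrAC -mulrA [Hval _ _ * _]mulrC.
Qed.

Theorem theorem3p7 :
  forall k l n : nat, exists K0 : nat, forall K : nat, (K0 <= K)%N ->
    coef3 (rhs_trunc K) k l n = signed_moment_HE k l n.
Proof.
move=> k l n; exists (k + n).+1 => K hK.
have kK : (k < K)%N by lia.
have nK : (#|'I_n| < K)%N by rewrite card_ord; lia.
have Hphi := @Phi_letters 'I_n {poly {poly rat}} wbR wfR K K nK setT.
have Erhs : rhs_trunc K =
    \prod_(a < K) ((\sum_(m < K) (wbR a *: 'X) ^+ m) * (1 + wfR a *: 'X)).
  rewrite /rhs_trunc big_split /= mulrC; congr (_ * _); apply: eq_bigr => j _.
    apply: eq_bigr => m _; congr (_ ^+ _).
    by rewrite /uP /vP /zP /wbR /uR -mul_polyC rmorphM rmorphXn.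
  by rewrite /uP /zP /wfR /uR -mul_polyC rmorphXn.
rewrite /signed_moment_HE /coef3 Erhs.
have -> : \sum_(s : {perm 'I_n})
     (-1) ^+ odd_perm s * (Hval k (cyc_count s) * Eval l (cyc_count s))
     = ((Phi (GK K) [set: 'I_n])`_l)`_k.
  rewrite /Phi !coef_sum; apply: eq_big => [s|s _].
    by apply/esym/subsetP => x; rewrite inE.
  by rewrite -porbits_cyc per_perm.
rewrite Hphi cardsT card_ord !coefMn.
set Z := \prod_(a < K) _.
set x := ((Z`_n)`_l)`_k; rewrite -[x *+ _]mulr_natr mulrCA mulVf ?mulr1 //.
by rewrite pnatr_eq0 -lt0n fact_gt0.
Qed.
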